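(* Let $r\ge2$ and let $\mu_1,\dots,\mu_r$, $P_{\vec n}$, the nearest neighbor recurrence coefficients $a_{\vec n,j},b_{\vec n,j}$ and the marginal recurrence coefficients $a_n^2(\mu_i),b_n(\mu_i)$ be as in the context. Suppose that $b_{\vec n,i}\ne b_{\vec n,j}$ for all $\vec n\in\mathbb{N}^r$ and all $1\le i\ne j\le r$. Then the nearest neighbor recurrence coefficients $a_{\vec n,j},b_{\vec n,j}$ ($\vec n\in\mathbb{N}^r$, $1\le j\le r$) can be computed (recursively in $|\vec n|$) from the relations, valid for all $1\le i\ne j\le r$, \begin{align*} b_{\vec n+\vec e_i,j}-b_{\vec n,j} &= b_{\vec n+\vec e_j,i}-b_{\vec n,i},\\ \sum_{k=1}^r a_{\vec n+\vec e_j,k}-\sum_{k=1}^r a_{\vec n+\vec e_i,k} &= b_{\vec n+\vec e_j,i}\,b_{\vec n,j}-b_{\vec n,i}\,b_{\vec n+\vec e_i,j},\\ \frac{a_{\vec n+\vec e_j,i}}{a_{\vec n,i}} &= \frac{b_{\vec n,j}-b_{\vec n,i}}{b_{\vec n-\vec e_i,j}-b_{\vec n-\vec e_i,i}} \quad(\text{when } n_i\ge1), \end{align*} and the boundary conditions $a_{n\vec e_j,j}=a_n^2(\mu_j)$, $b_{n\vec e_j,j}=b_n(\mu_j)$ for $n\ge0$, $1\le j\le r$ (with $a_0^2(\mu_j)=0$), and $a_{n\vec e_i,j}=0$ for $n\ge0$, $i\ne j$; i.e. these relations and boundary conditions determine all nearest neighbor recurrence coefficients uniquely.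
   Context: Let $\mu_1,\dots,\mu_r$ be positive Borel measures on $\mathbb{R}$ with all moments finite, forming a normal system: for every multi-index $\vec n=(n_1,\dots,n_r)\in\mathbb{N}^r$ there is a unique monic polynomial $P_{\vec n}$ of degree $|\vec n|=n_1+\dots+n_r$ with $\int x^kP_{\vec n}(x)\,d\mu_j(x)=0$ for $0\le k\le n_j-1$, $1\le j\le r$. Set $P_{\vec n}=0$ if some component of $\vec n$ is negative; $\vec e_1,\dots,\vec e_r$ are the standard unit vectors. The nearest neighbor recurrence relations are \[ xP_{\vec n}(x)=P_{\vec n+\vec e_k}(x)+b_{\vec n,k}P_{\vec n}(x)+\sum_{j=1}^r a_{\vec n,j}P_{\vec n-\vec e_j}(x),\qquad 1\le k\le r, \] defining the real numbers $a_{\vec n,j},b_{\vec n,k}$, with the convention $a_{\vec n,j}=0$ whenever $n_j=0$ (such coefficients multiply the zero polynomial). For each $i$, $P_n(x;\mu_i)$ are the monic orthogonal polynomials for $\mu_i$, with $xP_n(x;\mu_i)=P_{n+1}(x;\mu_i)+b_n(\mu_i)P_n(x;\mu_i)+a_n^2(\mu_i)P_{n-1}(x;\mu_i)$, $P_0=1$, $P_{-1}=0$. The three displayed relations in the claim are known to hold for the nearest neighbor recurrence coefficients. *)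

(* Defs.v *)
From mathcomp Require Import all_boot all_algebra all_classical all_reals all_analysis.

Set Implicit Arguments.
Unset Strict Implicit.
Unset Printing Implicit Defensive.

Import GRing.Theory Num.Theory.
Local Open Scope ring_scope.

Definition mindex (r : nat) := {ffun 'I_r -> nat}.

Section Defs.
Context {R : realType} {r : nat}.

Definition mabs (n : mindex r) : nat := (\sum_(i < r) n i)%N.
Definition mup (n : mindex r) (i : 'I_r) : mindex r :=
  [ffun k => (n k + (k == i))%N].
(* n - e_i  (only used when n_i >= 1) *)
Definition mdown (n : mindex r) (i : 'I_r) : mindex r :=
  [ffun k => (n k - (k == i))%N].
Definition munit (i : 'I_r) (m : nat) : mindex r :=
  [ffun k => if k == i then m else 0%N].

Definition finite_moments (mu : 'I_r -> {measure set R -> \bar R}) : Prop :=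
  forall i k, (mu i).-integrable setT (fun x : R => (x ^+ k)%:E).

Definition is_mop (mu : 'I_r -> {measure set R -> \bar R}) (n : mindex r)
  (p : {poly R}) : Prop :=
  [/\ p \is monic, size p = (mabs n).+1 &
      forall (j : 'I_r) (k : nat), (k < n j)%N ->
        (\int[mu j]_x ((x ^+ k * p.[x])%:E) = 0)%E].

Definition normal_system (mu : 'I_r -> {measure set R -> \bar R}) : Prop :=
  forall n : mindex r, exists! p : {poly R}, is_mop mu n p.

(* a, b are the nearest neighbor recurrence coefficients of the family P
   (with P_{n - e_j} = 0 when n_j = 0, and the convention a_{n,j} = 0 then) *)
Definition nn_recurrence (P : mindex r -> {poly R}) (a b : mindex r -> 'I_r -> R)
  : Prop :=
  (forall (n : mindex r) (k : 'I_r),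
     'X * P n = P (mup n k) + b n k *: P n
                + \sum_(j < r | (0 < n j)%N) a n j *: P (mdown n j))
  /\ (forall (n : mindex r) (j : 'I_r), n j = 0%N -> a n j = 0).

Definition is_op (nu : {measure set R -> \bar R}) (m : nat) (p : {poly R}) : Prop :=
  [/\ p \is monic, size p = m.+1 &
      forall k : nat, (k < m)%N -> (\int[nu]_x ((x ^+ k * p.[x])%:E) = 0)%E].

Definition three_term (Q : nat -> {poly R}) (a2 bm : nat -> R) : Prop :=
  (forall m : nat,
     'X * Q m = Q m.+1 + bm m *: Q m
                + a2 m *: (if m is m'.+1 then Q m' else 0))
  /\ a2 0%N = 0.

Definition nn_relations (a b : mindex r -> 'I_r -> R) : Prop :=
  [/\ forall (n : mindex r) (i j : 'I_r), i != j ->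
        b (mup n i) j - b n j = b (mup n j) i - b n i,
      forall (n : mindex r) (i j : 'I_r), i != j ->
        \sum_(k < r) a (mup n j) k - \sum_(k < r) a (mup n i) k
          = b (mup n j) i * b n j - b n i * b (mup n i) j
    & forall (n : mindex r) (i j : 'I_r), i != j -> (0 < n i)%N ->
        a (mup n j) i / a n i
          = (b n j - b n i) / (b (mdown n i) j - b (mdown n i) i)].

(* boundary conditions, in terms of the marginal coefficients a2 i m = a_m^2(mu_i),
   bm i m = b_m(mu_i) *)
Definition nn_boundary (a b : mindex r -> 'I_r -> R) (a2 bm : 'I_r -> nat -> R)
  : Prop :=
  [/\ forall (j : 'I_r) (m : nat), a (munit j m) j = a2 j m,
      forall (j : 'I_r) (m : nat), b (munit j m) j = bm j m
    & forall (i j : 'I_r) (m : nat), i != j -> a (munit i m) j = 0].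

End Defs.

(* Main.v *)
Require Import Defs.
From mathcomp Require Import all_boot all_algebra all_classical all_reals all_analysis.
From mathcomp Require Import ring lra.
Import Defs.
Import GRing.Theory Num.Theory.
Local Open Scope ring_scope.

Section Ana.
Context {R : realType} (nu : {measure set R -> \bar R}).
Hypothesis hnu : forall k, nu.-integrable setT (fun x : R => (x ^+ k)%:E).

Lemma int_poly (p : {poly R}) k :
  nu.-integrable setT (EFin \o (fun x => x ^+ k * p.[x])).
Proof.
elim/poly_ind: p k => [|p c IH] k.
  apply: (eq_integrable measurableT _ _ _ (integrableZl measurableT 0 (hnu k))) => x _ /=.
  by rewrite horner0 mulr0 mul0e.
have := integrableD measurableT (IH k.+1) (integrableZl measurableT c (hnu k)).
apply: (eq_integrable measurableT) => /= x _.
by rewrite hornerD hornerMX hornerC -EFinM -EFinD exprS; congr EFin; ring.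
Qed.

Definition L k (p : {poly R}) := \int[nu]_x (x ^+ k * p.[x]).

Lemma LE k p : (\int[nu]_x ((x ^+ k * p.[x])%:E))%E = (L k p)%:E.
Proof. by rewrite /L /Rintegral fineK //; apply: integrable_fin_num (int_poly p k). Qed.

Lemma LD k p q : L k (p + q) = L k p + L k q.
Proof.
rewrite /L -RintegralD //; try exact: int_poly.
by apply: eq_Rintegral => x _; rewrite hornerD mulrDr.
Qed.

Lemma LZ k c p : L k (c *: p) = c * L k p.
Proof.
rewrite /L -RintegralZl //; try exact: int_poly.
by apply: eq_Rintegral => x _; rewrite hornerZ mulrCA.
Qed.

Lemma LX k p : L k ('X * p) = L k.+1 p.
Proof.
by apply: eq_Rintegral => x _; rewrite [('X * p)]mulrC hornerMX exprS; ring.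
Qed.
End Ana.

Section MI.
Context {r : nat}.
Implicit Types (n : mindex r) (i j k : 'I_r) (m : nat).

Lemma mupE n i k : mup n i k = (n k + (k == i))%N.
Proof. by rewrite /mup ffunE. Qed.
Lemma mdownE n i k : mdown n i k = (n k - (k == i))%N.
Proof. by rewrite /mdown ffunE. Qed.
Lemma munitE i m k : munit i m k = if k == i then m else 0%N.
Proof. by rewrite /munit ffunE. Qed.

Lemma mabs_mup n i : mabs (mup n i) = (mabs n).+1.
Proof.
rewrite /mabs (bigD1 i) //= [in RHS](bigD1 i) //= mupE eqxx addn1 addSn.
congr (_ + _)%N.+1; apply: eq_bigr => k /negbTE kI; by rewrite mupE kI addn0.
Qed.

Lemma mup_mdown n i : (0 < n i)%N -> mup (mdown n i) i = n.
Proof.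
move=> h; apply/ffunP => k; rewrite mupE mdownE.
by case: eqP => [->|_]; rewrite ?subn0 ?addn0 // subnK.
Qed.

Lemma mdown_mup n i : mdown (mup n i) i = n.
Proof. by apply/ffunP => k; rewrite mdownE mupE addnK. Qed.

Lemma mup_comm n i j : mup (mup n i) j = mup (mup n j) i.
Proof. by apply/ffunP => k; rewrite !mupE -!addnA [((k == i) + _)%N]addnC. Qed.

Lemma mdown_mupC n i j : i != j -> mdown (mup n j) i = mup (mdown n i) j.
Proof.
move=> ij; apply/ffunP => k; rewrite mdownE mupE mupE mdownE.
case: (eqVneq k i) => [->|ki]; first by rewrite ?eqxx (negbTE ij) !addn0.
by rewrite ?(negbTE ki) !subn0.
Qed.

Lemma mabs_mdown n i : (0 < n i)%N -> mabs (mdown n i) = (mabs n).-1.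
Proof. by move=> h; rewrite -{2}(mup_mdown _ _ h) mabs_mup. Qed.

Lemma munit_up i m : mup (munit i m) i = munit i m.+1.
Proof.
apply/ffunP => k; rewrite mupE !munitE.
by case: eqP => _; rewrite ?addn1 ?addn0.
Qed.

Lemma munit_down i m : mdown (munit i m.+1) i = munit i m.
Proof.
apply/ffunP => k; rewrite mdownE !munitE.
by case: eqP => _; rewrite ?subn1 ?subn0.
Qed.

Lemma mabs_munit i m : mabs (munit i m) = m.
Proof.
rewrite /mabs (bigD1 i) //= munitE eqxx big1 ?addn0 // => k /negbTE kI.
by rewrite munitE kI.
Qed.

Lemma mdecomp n i : (exists2 j, j != i & (0 < n j)%N) \/ n = munit i (n i).
Proof.
case: (boolP [exists j, (j != i) && (0 < n j)%N]).
  by move=> /existsP [j /andP [h1 h2]]; left; exists j.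
move=> /existsPn h; right; apply/ffunP => k; rewrite munitE.
case: eqP => [->//|/eqP ki]; move: (h k); rewrite ki /=.
by rewrite lt0n negbK => /eqP.
Qed.

Lemma mabs0 n i : mabs n = 0%N -> n = munit i 0.
Proof.
move=> h; apply/ffunP => k; rewrite munitE if_same.
have : (n k <= mabs n)%N by rewrite /mabs (bigD1 k) //= leq_addr.
by rewrite h leqn0 => /eqP.
Qed.

Lemma mabs_pos n i : (0 < n i)%N -> (0 < mabs n)%N.
Proof. by move=> h; rewrite /mabs (bigD1 i) //= (leq_trans h) // leq_addr. Qed.

End MI.

Section Main.
Context {R : realType} {r : nat} (mu : 'I_r -> {measure set R -> \bar R})
  (P : mindex r -> {poly R}) (a b : mindex r -> 'I_r -> R).
Hypotheses (hfm : finite_moments mu) (hN : normal_system mu)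
  (hP : forall n, is_mop mu n (P n)) (hrec : nn_recurrence P a b)
  (hb : forall (n : mindex r) (i j : 'I_r), i != j -> b n i != b n j).

Implicit Types (n m : mindex r) (i j l : 'I_r) (k : nat) (p q : {poly R}).
Local Notation Lm i := (L (mu i)).

Lemma LD' i k p q : Lm i k (p + q) = Lm i k p + Lm i k q.
Proof. exact: LD (hfm i) _ _ _. Qed.
Lemma LZ' i k c p : Lm i k (c *: p) = c * Lm i k p.
Proof. exact: LZ (hfm i) _ _ _. Qed.
Lemma L0' i k : Lm i k 0 = 0.
Proof. by rewrite -(scale0r 0) LZ' mul0r. Qed.
Lemma Lsum i k (F : 'I_r -> {poly R}) :
  Lm i k (\sum_(l < r) F l) = \sum_(l < r) Lm i k (F l).
Proof. exact: (big_morph _ (LD' i k) (L0' i k)). Qed.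
Lemma LE' i k p : (\int[mu i]_x ((x ^+ k * p.[x])%:E))%E = (Lm i k p)%:E.
Proof. exact: LE (hfm i) _ _. Qed.

Lemma Pmonic n : P n \is monic. Proof. by case: (hP n). Qed.
Lemma Psize n : size (P n) = (mabs n).+1. Proof. by case: (hP n). Qed.
Lemma Ptop n : (P n)`_(mabs n) = 1.
Proof. by have := Pmonic n; rewrite monicE lead_coefE Psize => /eqP. Qed.
Lemma Phi n k : (mabs n < k)%N -> (P n)`_k = 0.
Proof. by move=> h; rewrite nth_default // Psize. Qed.
Lemma orth n j k : (k < n j)%N -> Lm j k (P n) = 0.
Proof. by case: (hP n) => _ _ h /h; rewrite LE' => -[]. Qed.

Definition S n := \sum_(l < r) a n l *: P (mdown n l).

Lemma recE n (k : 'I_r) : 'X * P n = P (mup n k) + b n k *: P n + S n.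
Proof.
rewrite (proj1 hrec n k) /S big_mkcond /=; congr (_ + _); apply: eq_bigr => l _.
case: ifP => // /negbT; rewrite lt0n negbK => /eqP h.
by rewrite (proj2 hrec _ _) // scale0r.
Qed.

Lemma Sterm_hi n l k : (mabs n <= k)%N -> (a n l *: P (mdown n l))`_k = 0.
Proof.
move=> hk; case: (posnP (n l)) => h; first by rewrite (proj2 hrec _ _) // scale0r coef0.
rewrite coefZ Phi ?mulr0 // mabs_mdown //.
by move: hk; case: (mabs n) (mabs_pos _ _ h) => // d _; apply: leq_trans.
Qed.

Lemma Sterm_top n l : (0 < mabs n)%N -> (a n l *: P (mdown n l))`_(mabs n).-1 = a n l.
Proof.
move=> hk; case: (posnP (n l)) => h; first by rewrite !(proj2 hrec _ _) // scale0r coef0.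
by rewrite coefZ -(mabs_mdown _ _ h) Ptop mulr1.
Qed.

Lemma S_hi n k : (mabs n <= k)%N -> (S n)`_k = 0.
Proof. by move=> hk; rewrite /S coef_sum big1 // => l _; apply: Sterm_hi. Qed.

Lemma S_top n : (0 < mabs n)%N -> (S n)`_(mabs n).-1 = \sum_(l < r) a n l.
Proof. by move=> hk; rewrite /S coef_sum; apply: eq_bigr => l _; apply: Sterm_top. Qed.

Lemma DifP n i j : P (mup n j) = P (mup n i) + (b n i - b n j) *: P n.
Proof.
have : P (mup n i) + b n i *: P n = P (mup n j) + b n j *: P n.
  by apply: (addIr (S n)); rewrite -!recE.
move=> e; rewrite scalerBl addrA e; by rewrite addrK.
Qed.

Lemma rel12 n i j :
  b (mup n i) j - b n j = b (mup n j) i - b n i /\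
  \sum_(l < r) a (mup n j) l - \sum_(l < r) a (mup n i) l
    = b (mup n j) i * b n j - b n i * b (mup n i) j.
Proof.
set d := mabs n.
have DifE : P (mup n i) + b n i *: P n = P (mup n j) + b n j *: P n.
  by apply: (addIr (S n)); rewrite -!recE.
have F : 'X * P (mup n i) + b n i *: ('X * P n)
       = 'X * P (mup n j) + b n j *: ('X * P n).
  by rewrite !scalerAr -!mulrDr DifE.
have E3 := recE (mup n i) j; have E4 := recE (mup n j) i.
rewrite mup_comm in E4.
rewrite E3 E4 in F.
have Fk k := congr1 (fun p => p`_k) F; simpl in Fk.
have Dk k := congr1 (fun p => p`_k) DifE; simpl in Dk.
have E1k k := congr1 (fun p => p`_k) (recE n i); simpl in E1k.
have mi : mabs (mup n i) = d.+1 by rewrite mabs_mup.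
have mj : mabs (mup n j) = d.+1 by rewrite mabs_mup.
have c1 : (P (mup n i))`_d.+1 = 1 by rewrite -mi Ptop.
have c2 : (P (mup n j))`_d.+1 = 1 by rewrite -mj Ptop.
have s1 : (S (mup n i))`_d.+1 = 0 by apply: S_hi; rewrite mi.
have s2 : (S (mup n j))`_d.+1 = 0 by apply: S_hi; rewrite mj.
have t1 : (S (mup n i))`_d = \sum_(l < r) a (mup n i) l.
  by have := S_top (mup n i); rewrite mi; apply.
have t2 : (S (mup n j))`_d = \sum_(l < r) a (mup n j) l.
  by have := S_top (mup n j); rewrite mj; apply.
have pn : (P n)`_d = 1 by apply: Ptop.
have sn : (S n)`_d = 0 by apply: S_hi.
have F1 := Fk d.+1; have F0 := Fk d.
rewrite !coefD !coefZ coefXM /= c1 c2 s1 s2 pn in F1.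
rewrite !coefD !coefZ t1 t2 in F0.
have D0 := Dk d; rewrite !coefD !coefZ pn in D0.
have E0 := E1k d; rewrite !coefD !coefZ pn sn addr0 in E0.
rewrite E0 in F0.
split; first lra.
have ey : (P (mup n j))`_d = (P (mup n i))`_d + b n i - b n j by lra.
have eb : b (mup n i) j = b (mup n j) i + b n j - b n i by lra.
rewrite ey eb in F0; rewrite eb; lra.
Qed.

Lemma Inz m i : Lm i (m i) (P m) != 0.
Proof.
apply/negP => /eqP h0.
case: (hN (mup m i)) => p [_ hu].
have e1 := hu _ (hP (mup m i)).
have hs : (size (P m) < size (P (mup m i)))%N by rewrite !Psize mabs_mup.
have : is_mop mu (mup m i) (P (mup m i) + P m).
  split.
  - by rewrite monicE lead_coefDl // -monicE Pmonic.
  - by rewrite size_polyDl // Psize.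
  - move=> j k hk; rewrite LE' LD' (orth _ _ _ hk) add0r.
    case: (eqVneq j i) => [ji|ji].
      subst j; move: hk; rewrite mupE eqxx addn1 ltnS leq_eqVlt.
      by case/orP => [/eqP ->|/orth ->]; rewrite ?h0.
    by move: hk; rewrite mupE (negbTE ji) addn0 => /orth ->.
move/hu => e2.
have : P m = 0 by apply: (addrI (P (mup m i))); rewrite addr0 -e2 -e1.
by apply/eqP; apply: monic_neq0 (Pmonic m).
Qed.

Lemma Irec n i : (0 < n i)%N ->
  Lm i (n i) (P n) = a n i * Lm i (n i).-1 (P (mdown n i)).
Proof.
move=> h; have := congr1 (Lm i (n i).-1) (recE n i).
rewrite LX prednK // => ->.
rewrite !LD' LZ' (orth (mup n i) i (n i).-1); last first.
  by rewrite mupE eqxx addn1 ltnS leq_pred.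
rewrite (orth n i (n i).-1); last by rewrite ltn_predL.
rewrite /S Lsum (bigD1 i) //= big1 ?addr0.
  by rewrite LZ' mulr0 add0r add0r.
move=> l li; rewrite LZ' orth ?mulr0 //.
by rewrite mdownE eq_sym (negbTE li) subn0 ltn_predL.
Qed.

Lemma a_nz n i : (0 < n i)%N -> a n i != 0.
Proof.
move=> h; apply/negP => /eqP a0.
by move: (Inz n i); rewrite Irec // a0 mul0r eqxx.
Qed.

Lemma rel3 n i j : i != j -> (0 < n i)%N ->
  a (mup n j) i / a n i = (b n j - b n i) / (b (mdown n i) j - b (mdown n i) i).
Proof.
move=> ij h; set m := mdown n i.
have In := Irec n i h.
have hmj : (0 < mup n j i)%N by rewrite mupE (negbTE ij) addn0.
have Inj := Irec (mup n j) i hmj.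
rewrite mupE (negbTE ij) addn0 mdown_mupC // -/m in Inj.
have L1 : Lm i (n i) (P (mup n j)) = (b n i - b n j) * Lm i (n i) (P n).
  rewrite (DifP n i j) LD' LZ' orth ?add0r //.
  by rewrite mupE eqxx addn1.
have L2 : Lm i (n i).-1 (P (mup m j)) = (b m i - b m j) * Lm i (n i).-1 (P m).
  rewrite (DifP m i j) LD' LZ' /m mup_mdown // orth ?add0r //.
  by rewrite ltn_predL.
have mi : m i = (n i).-1 by rewrite /m mdownE eqxx subn1.
have Imnz := Inz m i; rewrite mi in Imnz.
have anz := a_nz n i h.
have bnz : b m j - b m i != 0 by rewrite subr_eq0; apply: hb; rewrite eq_sym.
rewrite L1 L2 In !mulrA in Inj.
move/(mulIf Imnz): Inj => E.
apply/eqP; rewrite eqr_div //; apply/eqP; lra.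
Qed.

Section Bound.
Context (Pm : 'I_r -> nat -> {poly R}) (a2 bm : 'I_r -> nat -> R).
Hypotheses (hop : forall (i : 'I_r) (m : nat), is_op (mu i) m (Pm i m))
  (hT : forall i : 'I_r, three_term (Pm i) (a2 i) (bm i)).

Lemma Punit j (m : nat) : P (munit j m) = Pm j m.
Proof.
case: (hN (munit j m)) => p [_ hu]; rewrite -(hu _ (hP _)); apply: hu.
case: (hop j m) => h1 h2 h3; split => //; first by rewrite mabs_munit.
move=> j' k; rewrite munitE; case: eqP => [->|_] //; exact: h3.
Qed.

Lemma Sunit j (m : nat) : S (munit j m) = a (munit j m) j *: P (mdown (munit j m) j).
Proof.
rewrite /S (bigD1 j) //= big1 ?addr0 // => l lj.
by rewrite (proj2 hrec _ _) ?scale0r // munitE (negbTE lj).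
Qed.

Lemma bound j (m : nat) : a (munit j m) j = a2 j m /\ b (munit j m) j = bm j m.
Proof.
have R1 := recE (munit j m) j.
rewrite munit_up Sunit in R1.
case: (hT j) => T1 T0.
have T := T1 m; rewrite -!Punit in T.
rewrite R1 in T.
have Tk k := congr1 (fun p => p`_k) T; simpl in Tk.
have t0 := Ptop (munit j m); rewrite mabs_munit in t0.
case: m R1 T Tk t0 => [|m] R1 T Tk t0.
  have a0 : a (munit j 0) j = 0 by rewrite (proj2 hrec _ _) // munitE eqxx.
  have := Tk 0%N; rewrite a0 T0 !scale0r !addr0 !coefD !coefZ t0 => e.
  split => //; lra.
rewrite munit_down -Punit in Tk.
have t1 := Ptop (munit j m); rewrite mabs_munit in t1.
have t2 : (P (munit j m))`_m.+1 = 0 by rewrite Phi // mabs_munit.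
have e1 := Tk m.+1; rewrite !coefD !coefZ t0 t2 in e1.
have eb : b (munit j m.+1) j = bm j m.+1 by lra.
split => //.
have e2 := Tk m; rewrite !coefD !coefZ t1 eb in e2.
lra.
Qed.

End Bound.

End Main.

Lemma uniq_alg {R : realType} {r : nat} (a b a' b' : mindex r -> 'I_r -> R)
  (a2 bm : 'I_r -> nat -> R) :
  (forall (n : mindex r) j, n j = 0%N -> a n j = 0) -> (forall (n : mindex r) j, n j = 0%N -> a' n j = 0) ->
  nn_relations a b -> nn_relations a' b' ->
  nn_boundary a b a2 bm -> nn_boundary a' b' a2 bm ->
  (forall (n : mindex r) i j, i != j -> b n i != b n j) ->
  (forall (n : mindex r) i, (0 < n i)%N -> a n i != 0) ->
  forall n : mindex r, (forall j, a' n j = a n j) /\ (forall j, b' n j = b n j).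
Proof.
move=> ca ca' [r1 r2 r3] [r1' r2' r3'] [ba bb bc] [ba' bb' bc'] hb anz.
suff H : forall N (n : mindex r), (mabs n <= N)%N ->
    (forall j, a' n j = a n j) /\ (forall j, b' n j = b n j).
  by move=> n; apply: (H (mabs n)).
elim=> [|N IH] n hn.
  have e0 : mabs n = 0%N by apply/eqP; rewrite -leqn0.
  split => j; rewrite (mabs0 _ j e0).
  - by rewrite ca ?ca' // munitE eqxx.
  - by rewrite bb bb'.
case: (ltnP (mabs n) N.+1) => hlt; first by apply: IH; rewrite -ltnS.
have hN1 : mabs n = N.+1 by apply/eqP; rewrite eqn_leq hn hlt.
have HA : forall m : mindex r, mabs m = N.+1 -> forall i, a' m i = a m i.
  move=> m hm i.
  case: (posnP (m i)) => hmi; first by rewrite ca ?ca'.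
  case: (mdecomp m i) => [[j ji hj]|hu]; last by rewrite hu ba ba'.
  have ij : i != j by rewrite eq_sym.
  set k := mdown m j.
  have em : m = mup k j by rewrite /k mup_mdown.
  have hk : mabs k = N by rewrite /k mabs_mdown // hm.
  have hki : (0 < k i)%N by rewrite /k mdownE (negbTE ij) subn0.
  have [IHa IHb] := IH k (eq_leq hk).
  have [_ IHdb] : (forall j0, a' (mdown k i) j0 = a (mdown k i) j0) /\
                 (forall j0, b' (mdown k i) j0 = b (mdown k i) j0).
    by apply: IH; rewrite mabs_mdown // hk leq_pred.
  have e := r3' k i j ij hki; have e2 := r3 k i j ij hki.
  rewrite -em in e e2.
  rewrite (IHa i) (IHb j) (IHb i) (IHdb j) (IHdb i) -e2 in e.
  exact: (mulIf (invr_neq0 (anz k i hki))).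
split; first exact: HA.
move=> i.
case: (mdecomp n i) => [[j ji hj]|hu]; last by rewrite hu bb bb'.
have ij : i != j by rewrite eq_sym.
set k := mdown n j.
have em : n = mup k j by rewrite /k mup_mdown.
have hk : mabs k = N by rewrite /k mabs_mdown // hN1.
have [IHa IHb] := IH k (eq_leq hk).
have e1 := r1 k i j ij; have e1' := r1' k i j ij.
have e2 := r2 k i j ij; have e2' := r2' k i j ij.
have HAj := HA (mup k j) ltac:(by rewrite mabs_mup hk).
have HAi := HA (mup k i) ltac:(by rewrite mabs_mup hk).
rewrite (eq_bigr _ (fun l _ => HAj l)) (eq_bigr _ (fun l _ => HAi l)) in e2'.
rewrite !IHb in e1' e2'.
rewrite -em in e1 e1' e2 e2'.
have nz : b k j - b k i != 0 by rewrite subr_eq0; apply: hb.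
have ey : b (mup k i) j = b n i - b k i + b k j by lra.
have ey' : b' (mup k i) j = b' n i - b k i + b k j by lra.
rewrite ey in e2; rewrite ey' in e2'.
have : (b' n i - b n i) * (b k j - b k i) = 0 by lra.
by move/eqP; rewrite mulf_eq0 (negbTE nz) orbF subr_eq0 => /eqP.
Qed.

Theorem theorem3p3 (R : realType) (r : nat)
  (mu : 'I_r -> {measure set R -> \bar R})
  (P : mindex r -> {poly R}) (a b : mindex r -> 'I_r -> R)
  (Pm : 'I_r -> nat -> {poly R}) (a2 bm : 'I_r -> nat -> R) :
  (1 < r)%N ->
  finite_moments mu ->
  normal_system mu ->
  (forall n : mindex r, is_mop mu n (P n)) ->
  nn_recurrence P a b ->
  (forall (i : 'I_r) (m : nat), is_op (mu i) m (Pm i m)) ->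
  (forall i : 'I_r, three_term (Pm i) (a2 i) (bm i)) ->
  (forall (n : mindex r) (i j : 'I_r), i != j -> b n i != b n j) ->
  forall a' b' : mindex r -> 'I_r -> R,
    (forall (n : mindex r) (j : 'I_r), n j = 0%N -> a' n j = 0) ->
    nn_relations a' b' ->
    nn_boundary a' b' a2 bm ->
    (forall (n : mindex r) (j : 'I_r), a' n j = a n j) /\
    (forall (n : mindex r) (j : 'I_r), b' n j = b n j).
Proof.
move=> _ hfm hN hP hrec hop hT hb a' b' ca' rel' bnd'.
have H : (forall n, (forall j, a' n j = a n j) /\ (forall j, b' n j = b n j)).
  apply: (@uniq_alg R r a b a' b' a2 bm (proj2 hrec) ca' _ rel' _ bnd' hb).
  - split.
    + by move=> n i j _; case: (rel12 mu P a b hP hrec n i j).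
    + by move=> n i j _; case: (rel12 mu P a b hP hrec n i j).
    + by move=> n i j ij hi; apply: (rel3 mu P a b hfm hN hP hrec hb).
  - split.
    + by move=> j m; case: (bound mu P a b hN hP hrec Pm a2 bm hop hT j m).
    + by move=> j m; case: (bound mu P a b hN hP hrec Pm a2 bm hop hT j m).
    + by move=> i j m ij; rewrite (proj2 hrec _ _) // munitE eq_sym (negbTE ij).
  - by move=> n i hi; apply: (a_nz mu P a b hfm hN hP hrec).
by split => n j; [case: (H n)|case: (H n)].
Qed.
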